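(* Let $k\ge 2$, $X_1,\dots,X_k\in\mathcal{M}_d$ and $j\in\{1,\dots,k\}$. Then $$\operatorname{tr}_{\{1,\dots,k\}\setminus\{k\}}\big[(k\,k\!-\!1\cdots 1)^{T_j}(X_1\otimes\cdots\otimes X_k)\big]=\begin{cases}X_1\cdots X_j^T\cdots X_{k-1}X_k & j\ne k,\\ (X_1\cdots X_{k-1})^TX_k & j=k,\end{cases}$$ and $$\operatorname{tr}_{\{1,\dots,k\}\setminus\{1\}}\big[(1\,2\cdots k)^{T_j}(X_1\otimes\cdots\otimes X_k)\big]=\begin{cases}X_kX_{k-1}\cdots X_j^T\cdots X_1 & j\ne 1,\\ X_k^TX_{k-1}\cdots X_2X_1 & j=1.\end{cases}$$
   Context: $\mathcal{M}_d$ denotes complex $d\times d$ matrices. A permutation $\sigma\in S_k$ acts on $(\mathbb{C}^d)^{\otimes k}$ by $\sigma|v_1\rangle\otimes\cdots\otimes|v_k\rangle=|v_{\sigma^{-1}(1)}\rangle\otimes\cdots\otimes|v_{\sigma^{-1}(k)}\rangle$, extended linearly; permutations are in cycle notation, so $(1\,2\cdots k)$ maps $1\to2\to\cdots\to k\to 1$, and $(k\,k\!-\!1\cdots1)=(1\,2\cdots k)^{-1}$. $T_j$ is the partial transpose on the $j$-th tensor factor with respect to a fixed orthonormal basis, and $X^T$ is the transpose in that basis. $\operatorname{tr}_{\{1,\dots,k\}\setminus\{i\}}$ is the partial trace over all tensor factors except the $i$-th, yielding an element of $\mathcal{M}_d$. *)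

(* Defs.v *)
From mathcomp Require Import all_boot all_order all_algebra all_fingroup.
From mathcomp Require Import reals complex.
Set Implicit Arguments. Unset Strict Implicit. Unset Printing Implicit Defensive.
Import GRing.Theory.
Local Open Scope ring_scope.

(* Tensor factors are numbered 0..k-1 (paper: 1..k); basis indices 0..d-1.
   A basis vector of (C^d)^{\otimes k} is indexed by a multi-index
   a : {ffun 'I_k -> 'I_d}, i.e. |e_{a 0}> \otimes ... \otimes |e_{a (k-1)}>. *)
Definition midx (d k : nat) := {ffun 'I_k -> 'I_d}.

(* Operators on (C^d)^{\otimes k}, given by their matrix entries <a|M|b>. *)
Definition op (C : Type) (d k : nat) := midx d k -> midx d k -> C.

Section Ops.
Variables (C : comNzRingType) (d k : nat).

Definition op_mul (M N : op C d k) : op C d k :=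
  fun a c => \sum_(b : midx d k) M a b * N b c.

Definition tensor (X : 'I_k -> 'M[C]_d) : op C d k :=
  fun a b => \prod_(i < k) X i (a i) (b i).

(* Action of sigma: sigma |v_1..v_k> = |v_{sigma^-1 1} .. v_{sigma^-1 k}>,
   hence <a|sigma|b> = prod_i [a_i = b_{sigma^-1 i}]. *)
Definition perm_op (s : {perm 'I_k}) : op C d k :=
  fun a b => if [forall i, a i == b ((s^-1)%g i)] then 1 else 0.

Definition upd (a : midx d k) (j : 'I_k) (x : 'I_d) : midx d k :=
  [ffun i => if i == j then x else a i].

Definition ptrans (j : 'I_k) (M : op C d k) : op C d k :=
  fun a b => M (upd a j (b j)) (upd b j (a j)).

Definition ptrace_except (i : 'I_k) (M : op C d k) : 'M[C]_d :=
  \matrix_(p, q) \sum_(a : midx d k | a i == p) M a (upd a i q).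

End Ops.

Definition mxprod (C : comNzRingType) (d : nat) (s : seq 'M[C]_d) : 'M[C]_d :=
  foldr (@mulmx C d d d) 1%:M s.

(* The cycle (1 2 ... k) in 0-based indexing: i |-> i+1 mod k. *)
Definition cycle_up (k : nat) : {perm 'I_k} := perm (@ordS_inj k).

Definition first_ord (k : nat) (hk : (1 < k)%N) : 'I_k := Ordinal (ltnW hk).
Lemma last_ord_subproof (k : nat) (hk : (1 < k)%N) : (k.-1 < k)%N.
Proof. by case: k hk. Qed.
Definition last_ord (k : nat) (hk : (1 < k)%N) : 'I_k :=
  Ordinal (last_ord_subproof hk).

(* Main.v *)
Require Import Defs.
From mathcomp Require Import reals complex.
From mathcomp Require Import all_boot all_order all_algebra all_fingroup.
From mathcomp Require Import zify.
Set Implicit Arguments. Unset Strict Implicit. Unset Printing Implicit Defensive.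
Import GRing.Theory.
Local Open Scope ring_scope.

Section Helpers.
Variable C : comNzRingType.
Variable d : nat.

Definition ins n (i0 : 'I_n.+1) (x : 'I_d) (g : {ffun 'I_n -> 'I_d}) : {ffun 'I_n.+1 -> 'I_d} :=
  [ffun i => if unlift i0 i is Some j then g j else x].

Lemma ins_lift n (i0 : 'I_n.+1) x g j : ins i0 x g (lift i0 j) = g j.
Proof. by rewrite ffunE liftK. Qed.

Lemma ins_at n (i0 : 'I_n.+1) x g : ins i0 x g i0 = x.
Proof. by rewrite ffunE unlift_none. Qed.

Lemma split_sum n (i0 : 'I_n.+1) x (F : {ffun 'I_n.+1 -> 'I_d} -> C) :
  \sum_(a : {ffun 'I_n.+1 -> 'I_d} | a i0 == x) F a = \sum_(g : {ffun 'I_n -> 'I_d}) F (ins i0 x g).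
Proof.
rewrite (reindex (ins i0 x)) /=.
  by apply: eq_bigl => g; rewrite ins_at eqxx.
exists (fun a => [ffun j => a (lift i0 j)]).
  by move=> g _; apply/ffunP => j; rewrite ffunE ins_lift.
move=> a; rewrite inE => /eqP ax; apply/ffunP => i; rewrite ffunE.
by case: unliftP => [j ->|->]; rewrite ?ffunE // ax.
Qed.

Lemma sum_all_split n (F : {ffun 'I_n.+1 -> 'I_d} -> C) :
  \sum_(a : {ffun 'I_n.+1 -> 'I_d}) F a = \sum_x \sum_(g : {ffun 'I_n -> 'I_d}) F (ins ord0 x g).
Proof.
rewrite (partition_big (fun a : {ffun 'I_n.+1 -> 'I_d} => a ord0) xpredT) //=.
by apply: eq_bigr => x _; rewrite split_sum.
Qed.

Definition ext n (p q : 'I_d) (f : {ffun 'I_n -> 'I_d}) (m : nat) : 'I_d :=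
  nth q (p :: [seq f i | i <- enum 'I_n]) m.

Lemma ext0 n p q (f : {ffun 'I_n -> 'I_d}) : ext p q f 0 = p.
Proof. by []. Qed.

Lemma extS n p q (f : {ffun 'I_n -> 'I_d}) (j : 'I_n) : ext p q f j.+1 = f j.
Proof.
rewrite /ext /= (nth_map j) ?size_enum_ord ?ltn_ord //.
by rewrite nth_ord_enum.
Qed.

Lemma extN n p q (f : {ffun 'I_n -> 'I_d}) : ext p q f n.+1 = q.
Proof. by rewrite /ext /= nth_default // size_map size_enum_ord. Qed.

Lemma map_ins0 n x (g : {ffun 'I_n -> 'I_d}) :
  [seq ins ord0 x g i | i <- enum 'I_n.+1] = x :: [seq g i | i <- enum 'I_n].
Proof.
rewrite enum_ordSl /= ins_at -map_comp; congr (_ :: _).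
by apply: eq_map => i /=; rewrite ins_lift.
Qed.

Lemma path_lemma n (Y : nat -> 'M[C]_d) p q :
  \sum_(f : {ffun 'I_n -> 'I_d}) \prod_(m < n.+1) Y m (ext p q f m) (ext p q f m.+1)
  = mxprod (mkseq Y n.+1) p q.
Proof.
elim: n Y p => [|n IH] Y p.
  rewrite /mxprod /= mulmx1 (big_pred1 [ffun i => p]) => [|f].
    by rewrite big_ord1 ext0 extN.
  by rewrite /=; symmetry; apply/eqP/ffunP => -[].
rewrite sum_all_split.
have -> : mkseq Y n.+2 = Y 0%N :: mkseq (fun m => Y m.+1) n.+1.
  by rewrite /mkseq /= (iotaDl 1 1 n) -map_comp.
rewrite /= mxE; apply: eq_bigr => x _.
rewrite -IH mulr_sumr; apply: eq_bigr => g _.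
rewrite [LHS]big_ord_recl /=.
have E m : ext p q (ins ord0 x g) m.+1 = ext x q g m.
  by rewrite /ext /= map_ins0.
rewrite E; congr (_ * _); apply: eq_bigr => i _.
by rewrite /bump leq0n add1n !E.
Qed.


Lemma upd_same k (a : midx d k) j x : upd a j x j = x.
Proof. by rewrite ffunE eqxx. Qed.

Lemma upd_other k (a : midx d k) j x i : i != j -> upd a j x i = a i.
Proof. by rewrite ffunE => /negbTE ->. Qed.

Lemma ord_pred_lift0 n (j : 'I_n) : ord_pred (lift ord0 j) = lift ord_max j :> 'I_n.+1.
Proof.
apply: val_inj => /=; rewrite add0n modnDr modn_small; [exact: esym (lift_max j)| exact: ltnW (ltn_ord j)].
Qed.

Lemma ord_pred0 n : ord_pred ord0 = ord_max :> 'I_n.+1.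
Proof. by apply: val_inj; rewrite /= modn_small. Qed.

Lemma map_enum_val n (Y : 'I_n.+1 -> 'M[C]_d) :
  [seq Y m | m <- enum 'I_n.+1] = mkseq (fun m => Y (inord m)) n.+1.
Proof.
rewrite /mkseq -val_enum_ord -map_comp; apply: eq_map => m /=.
by rewrite inord_val.
Qed.

Lemma chain_up n (Y : 'I_n.+1 -> 'M[C]_d) p q :
  \sum_(a : {ffun 'I_n.+1 -> 'I_d} | a ord_max == p)
     \prod_(m < n.+1) Y m (a (ord_pred m)) (upd a ord_max q m)
  = mxprod [seq Y m | m <- enum 'I_n.+1] p q.
Proof.
rewrite split_sum map_enum_val -path_lemma; apply: eq_bigr => g _.
apply: eq_bigr => m _; rewrite inord_val; congr (Y m _ _).
  case: (unliftP ord0 m) => [j ->|->].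
    by rewrite ord_pred_lift0 ins_lift lift0 extS.
  by rewrite ord_pred0 ins_at.
case: (unliftP ord_max m) => [j ->|->].
    rewrite upd_other; last by rewrite eq_sym neq_lift.
    by rewrite ins_lift lift_max extS.
by rewrite upd_same extN.
Qed.

Lemma map_rev_enum n : [seq rev_ord i | i <- enum 'I_n] = rev (enum 'I_n).
Proof.
case: n => [|n]; first by rewrite enum_ord0.
apply: (eq_from_nth (x0 := ord0)); first by rewrite size_map size_rev.
rewrite size_map size_enum_ord => i hi.
rewrite nth_rev ?size_enum_ord // (nth_map ord0) ?size_enum_ord //.
have -> : i = Ordinal hi by [].
rewrite nth_ord_enum.
have -> : (n.+1 - (Ordinal hi).+1)%N = rev_ord (Ordinal hi) by [].
by rewrite nth_ord_enum.
Qed.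

Lemma rev_ordS_rev n (m : 'I_n.+1) : rev_ord (ordS (rev_ord m)) = ord_pred m.
Proof.
case: (unliftP ord0 m) => [j ->|->]; apply: val_inj => /=.
  have hj : (j < n)%N := ltn_ord j.
  have Hb : bump 0 j = j.+1 by rewrite /bump leq0n.
  rewrite Hb add0n modnDr (modn_small (_ : (j < n.+1)%N)); last by lia.
  rewrite (modn_small (_ : ((n.+1 - j.+2).+1 < n.+1)%N)); last by lia.
  lia.
rewrite subn1 /= modnn modn_small //; lia.
Qed.

Lemma rev_ord0 n : rev_ord (ord0 : 'I_n.+1) = ord_max.
Proof. by apply: val_inj; rewrite /= subn1. Qed.

Lemma chain_down n (Y : 'I_n.+1 -> 'M[C]_d) p q :
  \sum_(a : {ffun 'I_n.+1 -> 'I_d} | a ord0 == p)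
     \prod_(m < n.+1) Y m (a (ordS m)) (upd a ord0 q m)
  = mxprod (rev [seq Y m | m <- enum 'I_n.+1]) p q.
Proof.
have hinj : injective (fun a : {ffun 'I_n.+1 -> 'I_d} => [ffun i => a (rev_ord i)]).
  by move=> a b /ffunP E; apply/ffunP => i; have := E (rev_ord i); rewrite !ffunE rev_ordK.
rewrite (reindex_inj hinj) /=.
rewrite -map_rev -map_rev_enum -map_comp -chain_up.
apply: eq_big => [a|a _]; first by rewrite ffunE rev_ord0.
rewrite (reindex_inj rev_ord_inj) /=; apply: eq_bigr => m _.
rewrite ffunE rev_ordS_rev; congr (Y _ _ _).
rewrite !ffunE -(inj_eq rev_ord_inj) rev_ord0 rev_ordK.
by case: eqP.
Qed.


Section Ops2.
Variable k : nat.
Implicit Types (Y Z : op C d k) (a b c : midx d k).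

Lemma upd_upd a j x y : upd (upd a j x) j y = upd a j y.
Proof. by apply/ffunP => i; rewrite !ffunE; case: eqP. Qed.

Lemma upd_id a j : upd a j (a j) = a.
Proof. by apply/ffunP => i; rewrite !ffunE; case: eqP => // ->. Qed.

Lemma mul_perm_l (s : {perm 'I_k}) Z a c :
  op_mul (@perm_op C d k s) Z a c = Z [ffun i => a (s i)] c.
Proof.
rewrite /op_mul (bigD1 [ffun i => a (s i)]) //= big1 ?addr0.
  rewrite /perm_op; case: forallP => [_|[]]; first by rewrite mul1r.
  by move=> i; rewrite ffunE permKV.
move=> b nb; rewrite /perm_op; case: forallP => [H|_]; last by rewrite mul0r.
exfalso; move/eqP: nb; apply; apply/ffunP => i; rewrite ffunE.
by have := H (s i); rewrite permK => /eqP ->.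
Qed.

Lemma mul_perm_r (s : {perm 'I_k}) Z a c :
  op_mul Z (@perm_op C d k s) a c = Z a [ffun i => c ((s^-1)%g i)].
Proof.
rewrite /op_mul (bigD1 [ffun i => c ((s^-1)%g i)]) //= big1 ?addr0.
  rewrite /perm_op; case: forallP => [_|[]]; first by rewrite mulr1.
  by move=> i; rewrite ffunE.
move=> b nb; rewrite /perm_op; case: forallP => [H|_]; last by rewrite mulr0.
exfalso; move/eqP: nb; apply; apply/ffunP => i; rewrite ffunE.
by have := H i => /eqP ->.
Qed.

Lemma ptrans_tensor j (X : 'I_k -> 'M[C]_d) a b :
  ptrans j (tensor X) a b = tensor (fun i => if i == j then (X i)^T else X i) a b.
Proof.
rewrite /ptrans /tensor; apply: eq_bigr => i _; rewrite !ffunE.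
by case: eqP => [->|]; rewrite ?mxE.
Qed.

Lemma op_mul_eq Y Y' Z Z' a c :
  (forall x y, Y x y = Y' x y) -> (forall x y, Z x y = Z' x y) ->
  op_mul Y Z a c = op_mul Y' Z' a c.
Proof. by move=> HY HZ; apply: eq_bigr => b _; rewrite HY HZ. Qed.

Lemma ptrace_eq K Y Y' : (forall x y, Y x y = Y' x y) ->
  ptrace_except K Y = ptrace_except K Y'.
Proof. by move=> H; apply/matrixP => p q; rewrite !mxE; apply: eq_bigr. Qed.

Lemma move_ptrans K j Y Z : j != K ->
  ptrace_except K (op_mul (ptrans j Y) Z) = ptrace_except K (op_mul Y (ptrans j Z)).
Proof.
move=> /negbTE njK; apply/matrixP => p q; rewrite !mxE /op_mul !pair_big_dep /=.
pose h (x : midx d k * midx d k) := (upd x.1 j (x.2 j), upd x.2 j (x.1 j)).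
have hK : involutive h.
  by move=> [a b]; rewrite /h /= !upd_same !upd_upd !upd_id.
rewrite [RHS](reindex_inj (can_inj hK)) /=.
apply: eq_big => [[a b]|[a b] _] /=; first by rewrite !andbT ffunE (eq_sym K j) njK.
have njK' : j != K by rewrite njK.
rewrite /ptrans; congr (_ * _); congr (Z _ _).
  by rewrite upd_upd (upd_other _ _ njK') upd_same upd_id.
rewrite upd_same; apply/ffunP => i; rewrite !ffunE.
case: (eqVneq i j) => [->|nij]; first by rewrite njK.
by [].
Qed.

Lemma swap_ptrans K Y Z :
  ptrace_except K (op_mul (ptrans K Y) Z) = (ptrace_except K (op_mul (ptrans K Z) Y))^T.
Proof.
apply/matrixP => p q; rewrite !mxE /op_mul !pair_big_dep /=.
pose sw (x : 'I_d) := if x == p then q else if x == q then p else x.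
have swK : involutive sw.
  move=> x; rewrite /sw; case: (eqVneq x p) => [->|nxp]; first by rewrite eqxx; case: eqP.
  case: (eqVneq x q) => [->|nxq]; first by rewrite eqxx.
  by rewrite (negbTE nxp) (negbTE nxq).
pose h (x : midx d k * midx d k) := (upd x.2 K (sw (x.1 K)), upd x.1 K (x.2 K)).
have hK : involutive h.
  by move=> [a b]; rewrite /h /= !upd_same !upd_upd swK !upd_id.
rewrite [RHS](reindex_inj (can_inj hK)) /=.
have swq x : (sw x == q) = (x == p).
  rewrite /sw; case: (eqVneq x p) => [_|nxp]; first by rewrite !eqxx.
  case: (eqVneq x q) => [exq|nxq] /=; first by rewrite -exq eq_sym (negbTE nxp).
  by rewrite (negbTE nxq).
apply: eq_big => [[a b]|[a b]] /=; first by rewrite !andbT upd_same swq.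
rewrite andbT => /eqP aK.
have swp : sw p = q by rewrite /sw eqxx.
rewrite /ptrans /= mulrC aK swp !upd_same !upd_upd upd_id.
by congr (_ * _); congr (Y _ _); rewrite -{2}aK upd_id.
Qed.

End Ops2.


Lemma seq_pred (T : Type) n (f : 'I_n.+1 -> T) :
  [seq f (ord_pred m) | m <- enum 'I_n.+1] = f ord_max :: [seq f i | i <- enum 'I_n.+1 & i != ord_max].
Proof.
rewrite {1}enum_ordSl /= ord_pred0; congr (_ :: _).
rewrite enum_ordSr filter_rcons eqxx /= -map_comp.
rewrite (@eq_in_filter _ _ predT); last first.
  move=> x /mapP [y _ ->] /=; apply/eqP => /(congr1 val) /=; rewrite /= => E.
  by move: (ltn_ord y); rewrite E ltnn.
rewrite filter_predT -map_comp; apply: eq_map => y /=.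
rewrite ord_pred_lift0; congr f; apply: val_inj; exact: (lift_max y).
Qed.

Lemma seq_S (T : Type) n (f : 'I_n.+1 -> T) :
  [seq f (ordS m) | m <- enum 'I_n.+1] = rcons [seq f i | i <- enum 'I_n.+1 & i != ord0] (f ord0).
Proof.
rewrite {1}enum_ordSr map_rcons.
have -> : ordS (ord_max : 'I_n.+1) = ord0 by apply: val_inj; rewrite /= modnn.
congr rcons.
rewrite enum_ordSl /= -map_comp.
rewrite (@eq_in_filter _ _ predT); last first.
  by move=> x /mapP [y _ ->].
rewrite filter_predT -map_comp; apply: eq_map => y /=.
congr f; apply: val_inj => /=; rewrite modn_small ?ltnS ?ltn_ord //; exact: esym (lift0 y).
Qed.

End Helpers.

Unset Implicit Arguments.

Theorem proposition3 (R : realType) (d k : nat) (hk : (1 < k)%N)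
    (X : 'I_k -> 'M[R[i]]_d) (j : 'I_k) :
  (* first identity: cycle (k k-1 ... 1) = (1 2 ... k)^-1, keep factor k *)
  ptrace_except (last_ord hk)
      (op_mul (ptrans j (@perm_op R[i] d k ((cycle_up k)^-1)%g)) (tensor X))
    = (if j != last_ord hk then
         mxprod [seq (if i == j then (X i)^T else X i) | i <- enum 'I_k]
       else
         (mxprod [seq X i | i <- enum 'I_k & i != last_ord hk])^T
           *m X (last_ord hk))
  /\
  (* second identity: cycle (1 2 ... k), keep factor 1 *)
  ptrace_except (first_ord hk)
      (op_mul (ptrans j (@perm_op R[i] d k (cycle_up k))) (tensor X))
    = (if j != first_ord hk then
         mxprod (rev [seq (if i == j then (X i)^T else X i) | i <- enum 'I_k])
       else
         (mxprod (rev [seq X i | i <- enum 'I_k & i != first_ord hk]))^T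
           *m X (first_ord hk)).

Proof.
case: k hk X j => [|n] // hk X j.
have Lmax : last_ord hk = ord_max by apply: val_inj.
have F0 : first_ord hk = ord0 by apply: val_inj.
rewrite Lmax F0.
have cuE i : cycle_up n.+1 i = ordS i by rewrite permE.
have cuV i : ((cycle_up n.+1)^-1)%g i = ord_pred i.
  by apply: (@perm_inj _ (cycle_up n.+1)); rewrite permKV cuE ord_predK.
split.
- case: (eqVneq j ord_max) => [->|njK] /=.
  + rewrite swap_ptrans.
    pose X' := fun i => if i == ord_max then (X i)^T else X i.
    rewrite (@ptrace_eq _ _ _ _ _ (op_mul (tensor X') (@perm_op _ d n.+1 ((cycle_up n.+1)^-1)%g))); last first.
      by move=> x y; apply: op_mul_eq => // ; exact: ptrans_tensor.
    have -> : ptrace_except ord_max (op_mul (tensor X') (@perm_op _ d n.+1 ((cycle_up n.+1)^-1)%g))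
        = mxprod [seq X' (ord_pred m) | m <- enum 'I_n.+1].
      apply/matrixP => p q; rewrite mxE -chain_up; apply: eq_bigr => a _.
      rewrite mul_perm_r /tensor (reindex_inj (@ord_pred_inj n.+1)) /=.
      by apply: eq_bigr => m _; rewrite ffunE invgK cuE ord_predK.
    rewrite (seq_pred (fun i => X' i)) /= trmx_mul /X' eqxx trmxK; congr (_ *m _).
    congr (mxprod _)^T; apply/eq_in_map => i; rewrite mem_filter => /andP [ni _].
    by rewrite (negbTE ni).
  + rewrite move_ptrans //.
    pose X' := fun i => if i == j then (X i)^T else X i.
    rewrite (@ptrace_eq _ _ _ _ _ (op_mul (@perm_op _ d n.+1 ((cycle_up n.+1)^-1)%g) (tensor X'))); last first.
      by move=> x y; apply: op_mul_eq => // ; exact: ptrans_tensor.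
    apply/matrixP => p q; rewrite mxE -chain_up; apply: eq_bigr => a _.
    rewrite mul_perm_l /tensor; apply: eq_bigr => m _.
    by rewrite ffunE cuV.
- case: (eqVneq j ord0) => [->|njK] /=.
  + rewrite swap_ptrans.
    pose X' := fun i => if i == ord0 then (X i)^T else X i.
    rewrite (@ptrace_eq _ _ _ _ _ (op_mul (tensor X') (@perm_op _ d n.+1 (cycle_up n.+1)))); last first.
      by move=> x y; apply: op_mul_eq => // ; exact: ptrans_tensor.
    have -> : ptrace_except ord0 (op_mul (tensor X') (@perm_op _ d n.+1 (cycle_up n.+1)))
        = mxprod (rev [seq X' (ordS m) | m <- enum 'I_n.+1]).
      apply/matrixP => p q; rewrite mxE -chain_down; apply: eq_bigr => a _.
      rewrite mul_perm_r /tensor (reindex_inj (@ordS_inj n.+1)) /=.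
      by apply: eq_bigr => m _; rewrite ffunE cuV ordSK.
    rewrite (seq_S (fun i => X' i)) rev_rcons /= trmx_mul /X' eqxx trmxK; congr (_ *m _).
    congr (mxprod (rev _))^T; apply/eq_in_map => i; rewrite mem_filter => /andP [ni _].
    by rewrite (negbTE ni).
  + rewrite move_ptrans //.
    pose X' := fun i => if i == j then (X i)^T else X i.
    rewrite (@ptrace_eq _ _ _ _ _ (op_mul (@perm_op _ d n.+1 (cycle_up n.+1)) (tensor X'))); last first.
      by move=> x y; apply: op_mul_eq => // ; exact: ptrans_tensor.
    apply/matrixP => p q; rewrite mxE -chain_down; apply: eq_bigr => a _.
    rewrite mul_perm_l /tensor; apply: eq_bigr => m _.
    by rewrite ffunE cuE.
Qed.
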